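(* Let $N,M,k$ be positive integers, and for $x\in\mathbb{Z}_N^k$, $w\in\mathbb{Z}_N$ let $\eta^x_w:=|\{b\in\{0,\ldots,M-1\}^k : b\cdot x\equiv w \pmod N\}|$. Define $$P:=\frac{1}{M^kN^{k+1}}\sum_{x\in\mathbb{Z}_N^k}\Big(\sum_{w\in\mathbb{Z}_N}\sqrt{\eta^x_w}\Big)^2 .$$ Suppose $\alpha,\beta>0$ are such that $\Pr(\eta^x_w\ge\alpha)\ge\beta$ when $x\in\mathbb{Z}_N^k$ and $w\in\mathbb{Z}_N$ are chosen independently and uniformly at random. Then $\alpha\beta^2N/M^k\le P\le M^k/N$.
   Context: $P$ is the success probability of the pretty good measurement for identifying the hidden shift from $k$ copies of the generalized hidden shift states. $b\cdot x=\sum_{i=1}^k b_ix_i$. *)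

(* Defs.v *)
From mathcomp Require Import all_boot all_order all_algebra.
Set Implicit Arguments. Unset Strict Implicit. Unset Printing Implicit Defensive.
Import Order.TTheory GRing.Theory Num.Theory.
Local Open Scope ring_scope.

(* Z_N is represented by 'I_N (residues 0..N-1), N >= 1; Z_N^k by {ffun 'I_k -> 'I_N};
   b ranges over {0,...,M-1}^k = {ffun 'I_k -> 'I_M}. *)

Definition eta (N M k : nat) (x : {ffun 'I_k -> 'I_N}) (w : 'I_N) : nat :=
  #|[set b : {ffun 'I_k -> 'I_M} | ((\sum_(i < k) b i * x i) %% N)%N == w]|.

Definition Psucc (R : rcfType) (N M k : nat) : R :=
  (M%:R ^+ k * N%:R ^+ k.+1)^-1 *
  \sum_(x : {ffun 'I_k -> 'I_N}) (\sum_(w : 'I_N) Num.sqrt ((eta M x w)%:R)) ^+ 2.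

Definition prob_eta_ge (R : rcfType) (N M k : nat) (alpha : R) : R :=
  #|[set xw : {ffun 'I_k -> 'I_N} * 'I_N | alpha <= (eta M xw.1 xw.2)%:R]|%:R
  / (N%:R ^+ k.+1).

(* Main.v *)
Require Import Defs.
From mathcomp Require Import all_boot all_order all_algebra.
From mathcomp Require Import ring lra.
Import Order.TTheory GRing.Theory Num.Theory.
Local Open Scope ring_scope.

Lemma cs (R : realFieldType) (I : finType) (c : I -> R) :
  (\sum_i c i) ^+ 2 <= #|I|%:R * \sum_i c i ^+ 2.
Proof.
set S := \sum_i c i; set n : R := #|I|%:R.
have H : 0 <= \sum_i (n * c i - S) ^+ 2 by apply: sumr_ge0 => i _; exact: sqr_ge0.
have E : \sum_i (n * c i - S) ^+ 2 = n * (n * \sum_i c i ^+ 2 - S ^+ 2).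
  transitivity (\sum_i (n ^+ 2 * c i ^+ 2 - (2 * n * S) * c i + S ^+ 2)).
    by apply: eq_bigr => i _; rewrite /n; ring.
  rewrite !big_split /= sumrN -!mulr_sumr sumr_const -/S.
  rewrite -[_ *+ #|I|]mulr_natl -/n. ring.
rewrite E in H.
case: (eqVneq #|I| 0%N) => [I0|Ipos].
  have S0 : S = 0.
    rewrite /S big_pred0 // => i.
    by have := card0_eq I0 i.
  by rewrite S0 expr0n /= /n I0 mul0r.
have n0' : 0 < n by rewrite /n ltr0n lt0n.
by rewrite pmulr_rge0 // subr_ge0 in H.
Qed.
Lemma eta_sum (N M k : nat) (x : {ffun 'I_k -> 'I_N}) :
  (0 < N)%N -> (\sum_(w : 'I_N) eta M x w = M ^ k)%N.
Proof.
move=> N0.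
have -> : (M ^ k = #|{ffun 'I_k -> 'I_M}|)%N by rewrite card_ffun !card_ord.
have E1 w : eta M x w = (\sum_(b : {ffun 'I_k -> 'I_M} | ((\sum_(i < k) b i * x i) %% N)%N == w) 1)%N.
  by rewrite /eta sum1_card cardsE.
under eq_bigr => w _ do rewrite E1.
rewrite -sum1_card (exchange_big_dep predT) //=.
apply: eq_bigr => b _.
set v := ((\sum_(i < k) b i * x i) %% N)%N.
have lt : (v < N)%N by rewrite ltn_mod.
rewrite (bigD1 (Ordinal lt)) /= ?eqxx // big1 ?addn0 // => w /andP[/eqP E Hw'].
exfalso; move: Hw'; apply/negP; rewrite negbK; apply/eqP/val_inj => /=.
by rewrite E.
Qed.

Lemma sqrt_le_nat (R : rcfType) (n : nat) : Num.sqrt (n%:R : R) <= n%:R.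
Proof.
have h : (n%:R : R) <= n%:R ^+ 2.
  rewrite -natrX ler_nat; case: n => // n; by rewrite expnS expn1 leq_pmulr.
by apply: le_trans (ler_wsqrtr h) _; rewrite sqrtr_sqr ger0_norm.
Qed.

Lemma count_pairs (N M k : nat) (R : rcfType) (alpha : R) :
  #|[set xw : {ffun 'I_k -> 'I_N} * 'I_N | alpha <= (eta M xw.1 xw.2)%:R]|
  = (\sum_(x : {ffun 'I_k -> 'I_N}) #|[set w : 'I_N | (alpha <= (eta M x w)%:R)%R]|)%N.
Proof.
transitivity (\sum_(p : {ffun 'I_k -> 'I_N} * 'I_N | (alpha <= (eta M p.1 p.2)%:R)%R) 1)%N.
  by rewrite sum1_card cardsE.
transitivity (\sum_(x : {ffun 'I_k -> 'I_N}) \sum_(w : 'I_N | (alpha <= (eta M x w)%:R)%R) 1)%N.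
  by rewrite pair_big_dep /=.
by apply: eq_bigr => x _; rewrite sum1_card cardsE.
Qed.

Theorem lemma1 (R : rcfType) (N M k : nat) (alpha beta : R) :
  (0 < N)%N -> (0 < M)%N -> (0 < k)%N ->
  0 < alpha -> 0 < beta ->
  beta <= prob_eta_ge N M k alpha ->
  alpha * beta ^+ 2 * N%:R / M%:R ^+ k <= Psucc R N M k /\
  Psucc R N M k <= M%:R ^+ k / N%:R.
Proof.
move=> N0 M0 k0 a0 b0 hb.
set T := \sum_(x : {ffun 'I_k -> 'I_N}) (\sum_(w : 'I_N) Num.sqrt ((eta M x w)%:R : R)) ^+ 2.
have -> : Psucc R N M k = (M%:R ^+ k * N%:R ^+ k.+1)^-1 * T by [].
have cardX : #|{ffun 'I_k -> 'I_N}| = (N ^ k)%N by rewrite card_ffun !card_ord.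
have Np : (0 : R) < N%:R by rewrite ltr0n.
have Mp : (0 : R) < M%:R by rewrite ltr0n.
have Nkp : (0 : R) < N%:R ^+ k by rewrite exprn_gt0.
have Mkp : (0 : R) < M%:R ^+ k by rewrite exprn_gt0.
have ip : 0 <= (M%:R ^+ k * N%:R ^+ k.+1 : R)^-1.
  by rewrite invr_ge0 mulr_ge0 // ?exprn_ge0 // ltW.
split.
-
  set c := fun x : {ffun 'I_k -> 'I_N} => (#|[set w : 'I_N | alpha <= (eta M x w)%:R]|%:R : R).
  have Sx x : Num.sqrt alpha * c x <= \sum_(w : 'I_N) Num.sqrt ((eta M x w)%:R : R).
    have -> : Num.sqrt alpha * c x =
        \sum_(w : 'I_N) (if w \in [set w : 'I_N | alpha <= (eta M x w)%:R]
                         then Num.sqrt alpha else 0).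
      by rewrite -big_mkcond sumr_const mulr_natr.
    apply: ler_sum => w _; case: ifP => [|_]; last exact: sqrtr_ge0.
    by rewrite inE => h; apply: ler_wsqrtr.
  have Sx2 x : alpha * c x ^+ 2 <= (\sum_(w : 'I_N) Num.sqrt ((eta M x w)%:R : R)) ^+ 2.
    have := Sx x; rewrite -(ler_pXn2r (n:=2)) //; last first.
      by rewrite nnegrE; apply: sumr_ge0 => w _; exact: sqrtr_ge0.
      by rewrite nnegrE mulr_ge0 ?sqrtr_ge0.
    by rewrite exprMn sqr_sqrtr // ltW.
  have T1 : alpha * \sum_(x : {ffun 'I_k -> 'I_N}) c x ^+ 2 <= T.
    by rewrite mulr_sumr; apply: ler_sum => x _; exact: Sx2.
  have C2 := @cs R _ c.
  rewrite cardX in C2.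
  set C := \sum_(x : {ffun 'I_k -> 'I_N}) c x in C2.
  have Cc : C = (#|[set xw : {ffun 'I_k -> 'I_N} * 'I_N | alpha <= (eta M xw.1 xw.2)%:R]|%:R : R).
    by rewrite count_pairs natr_sum.
  have hC : beta * N%:R ^+ k.+1 <= C.
    by move: hb; rewrite /prob_eta_ge -Cc ler_pdivlMr // exprn_gt0.
  have hC2 : (beta * N%:R ^+ k.+1) ^+ 2 <= C ^+ 2.
    have h0 : 0 <= beta * N%:R ^+ k.+1 by rewrite mulr_ge0 ?exprn_ge0 // ltW.
    rewrite (ler_pXn2r (n:=2)) // nnegrE //.
    exact: le_trans h0 hC.
  have T2 : alpha * (beta * N%:R ^+ k.+1) ^+ 2 / N%:R ^+ k <= T.
    apply: le_trans _ T1.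
    rewrite ler_pdivrMr // mulrAC -mulrA ler_pM2l //.
    apply: le_trans hC2 _; by rewrite -natrX.
  apply: le_trans _ (ler_wpM2l ip T2).
  rewrite le_eqVlt; apply/orP; left; apply/eqP.
  rewrite !exprSr.
  move: (gt_eqF Np) (gt_eqF Nkp) (gt_eqF Mkp).
  move: (N%:R : R) (N%:R ^+ k : R) (M%:R ^+ k : R) => a0_ b0_ c0_ ha_ hb_ hc_.
  by field; rewrite ?ha_ ?hb_ ?hc_.
-
  have Sx (x : {ffun 'I_k -> 'I_N}) : \sum_(w : 'I_N) Num.sqrt ((eta M x w)%:R : R) <= M%:R ^+ k.
    have h1 : \sum_(w : 'I_N) Num.sqrt ((eta M x w)%:R : R) <= \sum_(w : 'I_N) ((eta M x w)%:R : R).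
      by apply: ler_sum => w _; exact: sqrt_le_nat.
    apply: le_trans h1 _.
    by rewrite -natr_sum (eta_sum N M k x N0) natrX.
  have T1 : T <= (N%:R ^+ k) * (M%:R ^+ k) ^+ 2.
    have h2 : T <= \sum_(x : {ffun 'I_k -> 'I_N}) (M%:R ^+ k) ^+ 2 :> R.
      apply: ler_sum => x _; rewrite (ler_pXn2r (n:=2)) ?nnegrE ?(ltW Mkp) ?Sx //.
      by apply: sumr_ge0 => w _; exact: sqrtr_ge0.
    apply: le_trans h2 _.
    by rewrite sumr_const cardX -(mulr_natl _ (N ^ k)) natrX.
  apply: le_trans (ler_wpM2l ip T1) _.
  rewrite le_eqVlt; apply/orP; left; apply/eqP.
  rewrite !exprSr.
  move: (gt_eqF Np) (gt_eqF Nkp) (gt_eqF Mkp).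
  move: (N%:R : R) (N%:R ^+ k : R) (M%:R ^+ k : R) => a0_ b0_ c0_ ha_ hb_ hc_.
  by field; rewrite ?ha_ ?hb_ ?hc_.
Qed.
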